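(* Let $G$ be a graph containing no cycle of length 6, let $x\in V(G)$, and let $(a,b,c)$ be a path on three distinct vertices in the induced subgraph $G[N_2(x)]$. Then there exists a vertex $v$ such that $\{v\}=N(x)\cap N(a)=N(x)\cap N(c)$.
   Context: All graphs are finite, simple and undirected; ''containing no cycle of length 6'' means having no subgraph (not necessarily induced) isomorphic to $C_6$. $N_i(S)$ denotes the set of vertices at distance exactly $i$ from the vertex set $S$, $N(S)=N_1(S)$, and $N(v)=N(\{v\})$, $N_2(v)=N_2(\{v\})$. *)

(* Defs.v *)
From mathcomp Require Import all_boot.
Set Implicit Arguments. Unset Strict Implicit. Unset Printing Implicit Defensive.

Definition simple_graph (T : finType) (e : rel T) : Prop :=
  symmetric e /\ irreflexive e.

Definition nbhd (T : finType) (e : rel T) (v : T) : {set T} := [set u | e v u].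

Fixpoint ball (T : finType) (e : rel T) (i : nat) (S : {set T}) : {set T} :=
  match i with
  | 0 => S
  | i'.+1 => let B := ball e i' S in B :|: [set u | [exists w in B, e w u]]
  end.

Definition Ndist (T : finType) (e : rel T) (i : nat) (S : {set T}) : {set T} :=
  match i with
  | 0 => S
  | i'.+1 => ball e i S :\: ball e i' S
  end.

(* G contains a (not necessarily induced) subgraph isomorphic to C_6 *)
Definition has_C6 (T : finType) (e : rel T) : Prop :=
  exists f : 'I_6 -> T, injective f /\ forall i : 'I_6, e (f i) (f (ordS i)).

(* Main.v *)
Require Import Defs.
From mathcomp Require Import all_boot.

Lemma N2P (T : finType) (e : rel T) (x y : T) :
  symmetric e -> y \in Ndist e 2 [set x] ->
  [/\ y != x, ~~ e x y & exists w, e x w && e w y].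
Proof.
move=> sym; rewrite /Ndist /= !inE negb_or => /andP [/andP [Hyx /existsP Hn] H].
have Hexy : ~~ e x y.
  apply/negP => Hxy; apply: Hn; exists x; by rewrite inE eqxx.
split => //.
case/orP: H => [/orP [H|/existsP [w /andP [Hw Hwy]]]|/existsP [w /andP [Hw Hwy]]].
- by rewrite H in Hyx.
- by rewrite inE in Hw; rewrite (eqP Hw) in Hwy; rewrite Hwy in Hexy.
- move: Hw; rewrite !inE => /orP [Hw|/existsP [z /andP [Hz Hzw]]].
    by rewrite (eqP Hw) in Hwy; rewrite Hwy in Hexy.
  rewrite inE in Hz; exists w; by rewrite -(eqP Hz) Hzw Hwy.
Qed.

Theorem lemma2p1 (T : finType) (e : rel T) (x a b c : T) :
  simple_graph e -> ~ has_C6 e ->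
  a \in Ndist e 2 [set x] -> b \in Ndist e 2 [set x] -> c \in Ndist e 2 [set x] ->
  a != b -> b != c -> a != c ->
  e a b -> e b c ->
  exists v : T, nbhd e x :&: nbhd e a = [set v] /\ nbhd e x :&: nbhd e c = [set v].
Proof.
move=> [sym irr] noC6 Ha Hb Hc ab bc ac eab ebc.
have [ax exa [u0 /andP [xu0 u0a]]] := @N2P _ e _ _ sym Ha.
have [bx exb _] := @N2P _ e _ _ sym Hb.
have [cx exc [w0 /andP [xw0 w0c]]] := @N2P _ e _ _ sym Hc.
have neq : forall p q, e p q -> p != q.
  by move=> p q Hpq; apply/eqP => E; rewrite E irr in Hpq.
have key : forall u w, e x u -> e u a -> e x w -> e w c -> u = w.
  move=> u w xu ua xw wc; apply/eqP/negPn/negP => uw; apply: noC6.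
  pose s := [:: x; u; a; b; c; w].
  have U : uniq s.
    have nx : forall y, e x y -> ~~ e x b -> y != b.
      by move=> y Hy Hn; apply/eqP => E; rewrite -E Hy in Hn.
    rewrite /= !inE !negb_or.
    rewrite (neq _ _ xu) eq_sym ax eq_sym bx eq_sym cx (neq _ _ xw) /=.
    rewrite (neq _ _ ua) (nx _ xu exb) uw /=.
    have uc : u != c by apply/eqP => E; rewrite -E xu in exc.
    rewrite uc ab ac /=.
    have aw : a != w by apply/eqP => E; rewrite E xw in exa.
    rewrite aw bc eq_sym (nx _ xw exb) /=.
    by rewrite eq_sym (neq _ _ wc).
  exists (fun i : 'I_6 => nth x s i); split.
    move=> i j /eqP; rewrite (@nth_uniq _ x s i j (ltn_ord i) (ltn_ord j) U) => /eqP.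
    exact: val_inj.
  case=> [[|[|[|[|[|[|i]]]]]] Hi] //=; by rewrite sym.
exists w0; split; apply/setP => y; rewrite /nbhd !inE ?(sym a y) ?(sym c y).
- apply/idP/idP => [/andP [xy ya]|/eqP ->]; last by rewrite -(key _ _ xu0 u0a xw0 w0c) xu0 u0a.
  by rewrite (key _ _ xy ya xw0 w0c).
- apply/idP/idP => [/andP [xy yc]|/eqP ->]; last by rewrite xw0 w0c.
  by rewrite -(key _ _ xu0 u0a xy yc) (key _ _ xu0 u0a xw0 w0c).
Qed.
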